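(* Suppose $F$ is symmetric, i.e. $F(-i)=1-F(i)$ for all $i\in[-1/2,1/2]$, and let $R\in(0,1)$, $\beta=F(1/2-R)$. Then every receiver type $i\in[-1/2,1/2]$ accepts the recommendation (i.e. $U_i^B\ge U_i^0$ and $U_i^0\ge U_i^D$), and the value of the recommendation system is $V=\pi^B\Delta_O^B$.
   Context: Setting. Consumer types are $i\in[-1/2,1/2]$, distributed according to a continuous cumulative distribution function $F$ with full support on $[-1/2,1/2]$. A product has a quality vector $(Q_1,Q_2)\in\{0,1\}^2$; a type-$i$ consumer gets payoff $(1/2+i)Q_1+(1/2-i)Q_2$ from it. The versions $(1,1),(1,0),(0,1),(0,0)$ have prior probabilities $q_H,q_1,q_2,q_L$ respectively, all strictly positive and summing to $1$. One product carries a recommendation from a sender whose type is drawn from $F$ independently of the product; given a threshold $R\in(0,1)$, the sender gives a buy recommendation $B$ if her payoff from the product is at least $R$ and a don't-buy recommendation $D$ otherwise. Let $\phi_1(R)=1-F(R-1/2)$, $\phi_2(R)=F(1/2-R)$ (under symmetry both equal $\beta$), $\pi^B=q_H+q_1\phi_1(R)+q_2\phi_2(R)$ and $\pi^D=1-\pi^B$. Posteriors: $p^B_H=q_H/\pi^B$, $p^B_1=q_1\phi_1(R)/\pi^B$, $p^B_2=q_2\phi_2(R)/\pi^B$, $p^B_L=0$; $p^D_H=0$, $p^D_1=q_1(1-\phi_1(R))/\pi^D$, $p^D_2=q_2(1-\phi_2(R))/\pi^D$, $p^D_L=q_L/\pi^D$. For $r\in\{B,D\}$ let $U_i^r=p_H^r+(1/2+i)p_1^r+(1/2-i)p_2^r$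 and $U_i^0=q_H+(1/2+i)q_1+(1/2-i)q_2$. The objective effect of the buy recommendation is $\Delta_O^B=p_H^B-q_H+\frac{p_1^B-q_1}{2}+\frac{p_2^B-q_2}{2}$. The value of the recommendation system is $V=\pi^B\int_{-1/2}^{1/2}\max\{U_i^B-U_i^0,0\}\,dF(i)+\pi^D\int_{-1/2}^{1/2}\max\{U_i^D-U_i^0,0\}\,dF(i)$, the expected payoff gain of a receiver drawn from $F$ who optimally chooses between the recommended product and an unrecommended alternative. *)

(* Defs.v *)
From HB Require Import structures.
From mathcomp Require Import all_boot all_order all_algebra.
From mathcomp Require Import all_classical all_reals all_analysis.
Set Implicit Arguments. Unset Strict Implicit. Unset Printing Implicit Defensive.
Import Order.TTheory GRing.Theory Num.Theory.
Local Open Scope ring_scope.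
Local Open Scope classical_set_scope.

Section Model.
Variable (R : realType).
(* F : cdf of types; qH q1 q2 qL : priors; r : threshold *)
Variables (F : R -> R) (qH q1 q2 qL r : R).

Definition phi1 : R := 1 - F (r - 2^-1).
Definition phi2 : R := F (2^-1 - r).
Definition piB : R := qH + q1 * phi1 + q2 * phi2.
Definition piD : R := 1 - piB.

Definition pBH : R := qH / piB.
Definition pB1 : R := q1 * phi1 / piB.
Definition pB2 : R := q2 * phi2 / piB.
Definition pBL : R := 0.
Definition pDH : R := 0.
Definition pD1 : R := q1 * (1 - phi1) / piD.
Definition pD2 : R := q2 * (1 - phi2) / piD.
Definition pDL : R := qL / piD.

Definition UB (i : R) : R := pBH + (2^-1 + i) * pB1 + (2^-1 - i) * pB2.
Definition UD (i : R) : R := pDH + (2^-1 + i) * pD1 + (2^-1 - i) * pD2.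
Definition U0 (i : R) : R := qH + (2^-1 + i) * q1 + (2^-1 - i) * q2.

Definition DeltaOB : R := pBH - qH + (pB1 - q1) / 2 + (pB2 - q2) / 2.

(* value of the recommendation system; mu is the law of the receiver type
   (the probability measure on R with cdf F), integral = \int ... dF(i) *)
Definition Vvalue (mu : {measure set R -> \bar R}) : \bar R :=
  (piB%:E * \int[mu]_(i in `[(- 2^-1)%R : R, 2^-1%R]) (Num.max (UB i - U0 i) 0)%:E
   + piD%:E * \int[mu]_(i in `[(- 2^-1)%R : R, 2^-1%R]) (Num.max (UD i - U0 i) 0)%:E)%E.
End Model.

(* Main.v *)
Require Import Defs.
From HB Require Import structures.
From mathcomp Require Import all_boot all_order all_algebra.
From mathcomp Require Import all_classical all_reals all_analysis.
From mathcomp Require Import ring lra measurable_realfun.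
Import Order.TTheory GRing.Theory Num.Theory numFieldNormedType.Exports.
Local Open Scope ring_scope.
Local Open Scope classical_set_scope.

Lemma Fge0 {R : realType} {F : R -> R} {mu : probability R R} :
  (forall x : R, mu `]-oo, x] = (F x)%:E) -> forall x, 0 <= F x.
Proof. by move=> hmu x; rewrite -lee_fin -hmu; exact: measure_ge0. Qed.

Lemma Fle1 {R : realType} {F : R -> R} {mu : probability R R} :
  (forall x : R, mu `]-oo, x] = (F x)%:E) -> forall x, F x <= 1.
Proof. by move=> hmu x; rewrite -lee_fin -hmu; exact: probability_le1. Qed.

Lemma Fmono {R : realType} {F : R -> R} {mu : probability R R} :
  (forall x : R, mu `]-oo, x] = (F x)%:E) -> forall x y, x <= y -> F x <= F y.
Proof.
move=> hmu x y xy; rewrite -lee_fin -!hmu; apply: le_measure; rewrite ?inE//.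
by apply: subset_itvl; rewrite bnd_simp.
Qed.

Lemma Fsym_all {R : realType} {F : R -> R} {mu : probability R R} :
  (forall x : R, mu `]-oo, x] = (F x)%:E) ->
  F (- 2^-1) = 0 -> F (2^-1) = 1 ->
  (forall i, - 2^-1 <= i <= 2^-1 -> F (- i) = 1 - F i) ->
  forall x, F (- x) = 1 - F x.
Proof.
move=> hmu F0 F1 hs x.
have [xD|] := boolP (- 2^-1 <= x <= 2^-1); first exact: hs.
rewrite negb_and -!ltNge => /orP[xl|xr].
- have -> : F x = 0.
    by apply/le_anti; rewrite (Fge0 hmu) andbT -F0 (Fmono hmu)// ltW.
  rewrite subr0; apply/le_anti; rewrite (Fle1 hmu) /= -F1 (Fmono hmu)//.
  by rewrite lerNr ltW.
- have -> : F x = 1.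
    by apply/le_anti; rewrite (Fle1 hmu) /= -F1 (Fmono hmu)// ltW.
  apply/le_anti; rewrite subrr (Fge0 hmu) andbT -F0 (Fmono hmu)//.
  by rewrite lerN2 ltW.
Qed.

Lemma mu_open {R : realType} {F : R -> R} {mu : probability R R} :
  continuous F -> (forall x : R, mu `]-oo, x] = (F x)%:E) ->
  forall x, mu `]-oo, x[ = (F x)%:E.
Proof.
move=> hc hmu x.
have le1 : (mu `]-oo, x[ <= (F x)%:E)%E.
  rewrite -hmu; apply: le_measure; rewrite ?inE//.
  by apply: subset_itvl; rewrite bnd_simp.
have fin : mu `]-oo, x[ \is a fin_num by rewrite fin_num_measure.
rewrite -(fineK fin); congr EFin; apply/le_anti.
rewrite -lee_fin fineK // le1 /=.
apply/ler_addgt0Pr => e e0.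
have := hc x; move/cvgrPdist_lt => /(_ e e0).
case/nbhs_ballP => d /= d0 /(_ (x - d / 2)) /=.
have hb : ball x d (x - d / 2).
  rewrite /ball /= opprB addrC subrK ger0_norm ?divr_ge0 ?ltW//.
  by rewrite ltr_pdivrMr// ltr_pMr// ltr1n.
move=> /(_ hb) h.
have h2 : F (x - d / 2) <= fine (mu `]-oo, x[).
  rewrite -lee_fin fineK // -hmu; apply: le_measure; rewrite ?inE//.
  apply: subset_itvl; rewrite bnd_simp ltrBlDr ltrDl divr_gt0//.
move: h; rewrite ltr_norml; lra.
Qed.

Lemma mu_oc {R : realType} {F : R -> R} {mu : probability R R} :
  (forall x : R, mu `]-oo, x] = (F x)%:E) ->
  forall a b, a <= b -> mu `]a, b] = (F b - F a)%:E.
Proof.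
move=> hmu a b ab.
have : `]a, b]%classic = `]-oo, b] `\` `]-oo, a] => [|->].
  by rewrite -[RHS]setCK setCD setCitvl setUC -[LHS]setCK setCitv.
rewrite measureD ?setIidr//; last by rewrite -ge0_fin_numE// fin_num_measure.
  by rewrite EFinB -(hmu b) -(hmu a).
by apply: subset_itvl; rewrite bnd_simp.
Qed.

Lemma mu_co {R : realType} {F : R -> R} {mu : probability R R} :
  continuous F -> (forall x : R, mu `]-oo, x] = (F x)%:E) ->
  forall a b, a <= b -> mu `[a, b[ = (F b - F a)%:E.
Proof.
move=> hc hmu a b ab.
have : `[a, b[%classic = `]-oo, b[ `\` `]-oo, a[ => [|->].
  by rewrite -[RHS]setCK setCD setCitvl setUC -[LHS]setCK setCitv.
rewrite measureD ?setIidr//; last by rewrite -ge0_fin_numE// fin_num_measure.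
  by rewrite EFinB -(mu_open hc hmu b) -(mu_open hc hmu a).
by apply: subset_itvl; rewrite bnd_simp.
Qed.

Lemma mu_sym {R : realType} {F : R -> R} {mu : probability R R} :
  continuous F -> (forall x : R, mu `]-oo, x] = (F x)%:E) ->
  (forall x, F (- x) = 1 - F x) ->
  forall A, measurable A -> mu A = pushforward mu (-%R : R -> R) A.
Proof.
move=> hc hmu hs A mA.
have mopp : measurable_fun setT (-%R : R -> R) by exact: measurable_realfun.oppr_measurable.
pose nu : {measure set R -> \bar R} := pushforward mu (-%R : R -> R).
pose g := (fun k : nat => `](- k%:R), k%:R]%classic : set R).
apply: (measure_unique (@ocitv R) g _ (@ocitvI R) _ _ mu (nu mopp)) => //.
- by move=> k; exact: is_ocitv.
- apply/seteqP; split => // x _ /=.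
  exists (Num.bound x) => //; rewrite /g /= in_itv/= ltrNl unstable.ltrNbound ltW ?unstable.ltr_bound//.
- move=> X /ocitvP [X0|[[a b] /= ab X1]].
    by rewrite X0 /nu /= /pushforward preimage_set0 !measure0.
  rewrite X1.
  rewrite /nu /= /pushforward opp_preimage_itvbndbnd /= (mu_oc hmu) ?ltW//.
  by rewrite (mu_co hc hmu) ?lerN2 ?ltW// !hs; congr EFin; ring.
- by move=> k; rewrite /g (le_lt_trans (probability_le1 _ _)) ?ltry.
Qed.

Lemma int_sym {R : realType} {F : R -> R} {mu : probability R R} :
  continuous F -> (forall x : R, mu `]-oo, x] = (F x)%:E) ->
  (forall x, F (- x) = 1 - F x) ->
  forall g : R -> \bar R, measurable_fun `[(- 2^-1 : R), 2^-1] g ->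
  {in `[(- 2^-1 : R), 2^-1], forall x, (0 <= g x)%E} ->
  (\int[mu]_(x in `[(- 2^-1 : R)%R, 2^-1%R]) g x =
   \int[mu]_(x in `[(- 2^-1 : R)%R, 2^-1%R]) g (- x)%R)%E.
Proof.
move=> hc hmu hs g mg g0.
have mopp : measurable_fun setT (-%R : R -> R).
  exact: measurable_realfun.oppr_measurable.
pose nu : {measure set R -> \bar R} := pushforward mu (-%R : R -> R).
transitivity (\int[nu mopp]_(x in `[(- 2^-1 : R)%R, 2^-1%R]) g x)%E.
  apply: eq_measure_integral => A mA _; exact: (mu_sym hc hmu hs).
rewrite /nu ge0_integral_pushforward //.
by rewrite opp_preimage_itvbndbnd /= opprK.
Qed.

Lemma alg_main {R : realType} (qH q1 q2 qL b i : R) :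
  0 < qH -> 0 < q1 -> 0 < q2 -> 0 < qL -> qH + q1 + q2 + qL = 1 ->
  0 < b < 1 -> - 2^-1 <= i <= 2^-1 ->
  let P := qH + q1 * b + q2 * b in
  qH + (2^-1 + i) * q1 + (2^-1 - i) * q2 <=
    qH / P + (2^-1 + i) * (q1 * b / P) + (2^-1 - i) * (q2 * b / P) /\
  0 + (2^-1 + i) * (q1 * (1 - b) / (1 - P)) + (2^-1 - i) * (q2 * (1 - b) / (1 - P))
    <= qH + (2^-1 + i) * q1 + (2^-1 - i) * q2.
Proof.
move=> hH h1 h2 hL hs /andP[b0 b1] /andP[il ir] P.
have qLE : qL = 1 - qH - q1 - q2 by lra.
set t := 2^-1 + i.
have t0 : 0 <= t by rewrite /t; lra.
have t1 : t <= 1 by rewrite /t; lra.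
have ti : 2^-1 - i = 1 - t by rewrite /t; lra.
rewrite ti.
pose E := qH * (1 - P) + t * q1 * (b - P) + (1 - t) * q2 * (b - P).
have E1 : 0 <= q2 * qH * (1 - b) + qL * (qH + q1 * b).
  apply: addr_ge0; first by apply: mulr_ge0; [apply: mulr_ge0|]; lra.
  by apply: mulr_ge0; [lra|]; apply: addr_ge0; [lra|apply: mulr_ge0]; lra.
have E0 : 0 <= q1 * qH * (1 - b) + qL * (qH + q2 * b).
  apply: addr_ge0; first by apply: mulr_ge0; [apply: mulr_ge0|]; lra.
  by apply: mulr_ge0; [lra|]; apply: addr_ge0; [lra|apply: mulr_ge0]; lra.
have EE : E = (1 - t) * (q1 * qH * (1 - b) + qL * (qH + q2 * b))
            + t * (q2 * qH * (1 - b) + qL * (qH + q1 * b)).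
  rewrite /E /P qLE; ring.
have Ege0 : 0 <= E.
  rewrite EE; apply: addr_ge0; apply: mulr_ge0 => //; lra.
have P0 : 0 < P.
  rewrite /P; apply: ltr_wpDr; first by apply: mulr_ge0; lra.
  apply: ltr_wpDr; first by apply: mulr_ge0; lra.
  done.
have P1 : P < 1.
  have : q1 * b < q1 by rewrite -[X in _ < X]mulr1 ltr_pM2l.
  have : q2 * b < q2 by rewrite -[X in _ < X]mulr1 ltr_pM2l.
  rewrite /P; lra.
split.
- rewrite -subr_ge0.
  have -> : qH / P + t * (q1 * b / P) + (1 - t) * (q2 * b / P) -
      (qH + t * q1 + (1 - t) * q2) = E / P.
    rewrite /E; field; lra.
  by apply: divr_ge0 => //; lra.
- rewrite -subr_ge0.
  have -> : qH + t * q1 + (1 - t) * q2 -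
      (0 + t * (q1 * (1 - b) / (1 - P)) + (1 - t) * (q2 * (1 - b) / (1 - P))) = E / (1 - P).
    rewrite /E; field; lra.
  by apply: divr_ge0 => //; lra.
Qed.

Lemma maff {R : realType} (D : set R) (c0 c1 : R) :
  measurable_fun D (fun i : R => (c0 + c1 * i)%:E).
Proof.
apply/measurable_EFinP.
by apply: measurable_funD => //; apply: measurable_funM.
Qed.

Theorem proposition4 (R : realType) (F : R -> R) (mu : probability R R)
  (qH q1 q2 qL r : R) :
  continuous F ->
  F (- 2^-1) = 0 -> F (2^-1) = 1 ->
  {in `[(- 2^-1), 2^-1] &, forall x y, x < y -> F x < F y} ->
  (forall x : R, mu `]-oo, x] = (F x)%:E) ->
  0 < qH -> 0 < q1 -> 0 < q2 -> 0 < qL -> qH + q1 + q2 + qL = 1 ->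
  0 < r < 1 ->
  (forall i, - 2^-1 <= i <= 2^-1 -> F (- i) = 1 - F i) ->
  (forall i, - 2^-1 <= i <= 2^-1 ->
     U0 qH q1 q2 i <= UB F qH q1 q2 r i /\ UD F qH q1 q2 r i <= U0 qH q1 q2 i) /\
  Vvalue F qH q1 q2 r mu = (piB F qH q1 q2 r * DeltaOB F qH q1 q2 r)%:E.
Proof.
move=> hc F0 F1 hmono hmu hH h1 h2 hL hsum /andP[r0 r1] hs.
have hsa := Fsym_all hmu F0 F1 hs.
set b := F (2^-1 - r).
have phi1E : phi1 F r = b by rewrite /phi1 /b -(opprB r) hsa.
have phi2E : phi2 F r = b by [].
have b0 : 0 < b.
  rewrite -F0 /b; apply: hmono; rewrite ?in_setE /= ?in_itv /=; try (apply/andP; split); lra.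
have b1 : b < 1.
  rewrite -F1 /b; apply: hmono; rewrite ?in_setE /= ?in_itv /=; try (apply/andP; split); lra.
have part1 : forall i, - 2^-1 <= i <= 2^-1 ->
     U0 qH q1 q2 i <= UB F qH q1 q2 r i /\ UD F qH q1 q2 r i <= U0 qH q1 q2 i.
  move=> i hi.
  have /andP[] : 0 < b < 1 by rewrite b0 b1.
  move=> _ _.
  have := @alg_main R qH q1 q2 qL b i hH h1 h2 hL hsum (introT andP (conj b0 b1)) hi.
  by rewrite /U0 /UB /UD /pBH /pB1 /pB2 /pDH /pD1 /pD2 /piD /piB phi1E phi2E.
split => //.
have inD : forall i, i \in (`[(- 2^-1 : R)%R, 2^-1%R] : set R) -> - 2^-1 <= i <= 2^-1.
  by move=> i; rewrite in_setE /= in_itv.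
have mD : measurable (`[(- 2^-1 : R)%R, 2^-1%R] : set R) by [].
rewrite /Vvalue.
have I2 : (\int[mu]_(i in `[(- 2^-1 : R)%R, 2^-1%R])
    (Num.max (UD F qH q1 q2 r i - U0 qH q1 q2 i) 0)%:E = 0)%E.
  rewrite (eq_integral (fun _ => 0%E)) ?integral0 // => i /inD hi.
  have [_ h] := part1 i hi.
  by rewrite max_r // subr_le0.
rewrite I2 mule0 adde0 EFinM; congr (_ * _)%E.
pose h := fun i => UB F qH q1 q2 r i - U0 qH q1 q2 i.
have hE : forall i, h i = h 0 + (h 1 - h 0) * i.
  by move=> i; rewrite /h /UB /U0; ring.
have h0 : forall i, i \in (`[(- 2^-1 : R)%R, 2^-1%R] : set R) -> 0 <= h i.
  by move=> i /inD hi; have [h' _] := part1 i hi; rewrite /h subr_ge0.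
have hN : forall i, i \in (`[(- 2^-1 : R)%R, 2^-1%R] : set R) -> 0 <= h (- i).
  move=> i /inD hi; apply: h0; rewrite in_setE /= in_itv /=.
  by apply/andP; split; lra.
have hsum2 : forall i, h i + h (- i) = 2 * DeltaOB F qH q1 q2 r.
  by move=> i; rewrite /h /UB /U0 /DeltaOB; field.
rewrite (eq_integral (fun i => (h i)%:E)); last first.
  by move=> i hi; rewrite max_l //; apply: h0.
have mh : measurable_fun (`[(- 2^-1 : R)%R, 2^-1%R] : set R) (fun i => (h i)%:E).
  rewrite (_ : (fun i => (h i)%:E) = (fun i => (h 0 + (h 1 - h 0) * i)%:E)); last first.
    by apply: funext => i; rewrite -hE.
  exact: maff.
have mhN : measurable_fun (`[(- 2^-1 : R)%R, 2^-1%R] : set R) (fun i => (h (- i))%:E).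
  rewrite (_ : (fun i => (h (- i))%:E) = (fun i => (h 0 + (- (h 1 - h 0)) * i)%:E)); last first.
    by apply: funext => i; rewrite hE mulNr mulrN.
  exact: maff.
have Isym := int_sym hc hmu hsa (fun i => (h i)%:E) mh (fun i hi => h0 i hi).
have mD1 : mu (`[(- 2^-1 : R)%R, 2^-1%R] : set R) = 1%E.
  apply/le_anti; rewrite probability_le1 //=.
  rewrite -[X in (X <= _)%E](_ : (F (2^-1) - F (- 2^-1))%:E = 1%E); last by rewrite F0 F1 subr0.
  rewrite -(mu_oc hmu); last lra.
  by apply: le_measure; rewrite ?inE //; apply: subset_itvr; rewrite bnd_simp.
have H2 : (\int[mu]_(i in `[(- 2^-1 : R)%R, 2^-1%R]) (h i)%:E +
           \int[mu]_(i in `[(- 2^-1 : R)%R, 2^-1%R]) (h i)%:E =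
           (2 * DeltaOB F qH q1 q2 r)%:E)%E.
  rewrite {2}Isym -ge0_integralD //; last 2 first.
  - by move=> i hi; rewrite lee_fin; apply: h0; rewrite in_setE.
  - by move=> i hi; rewrite lee_fin; apply: hN; rewrite in_setE.
  rewrite (eq_integral (fun _ => (2 * DeltaOB F qH q1 q2 r)%:E)); last first.
    by move=> i _; rewrite /= -EFinD hsum2.
  rewrite integral_cst // -[RHS]mule1; congr (_ * _)%E; exact: mD1.
move: H2; case: (\int[mu]_(i in _) _)%E => //= x.
by rewrite -EFinD => -[] hx; congr EFin; lra.
Qed.
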